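(* Let $n\ge 1$, $\nu>0$, and let $\alpha_u,\alpha_y\ge 0$ with $\max\{\alpha_u,\alpha_y\}>0$. Let $M\in\mathbb{R}^{n\times n}$ be a diagonal matrix with positive diagonal entries, let $L\in\mathbb{R}^{n\times n}$, and let $\Pi_k\in\mathbb{R}^{n\times n}$ be a diagonal matrix whose diagonal entries all lie in $\{0,1\}$. Set $$\gamma_1=\frac{\alpha_y^2\nu}{\alpha_y^2\nu+\alpha_u^2},\qquad \gamma_2=\frac{\alpha_u^2}{\alpha_y^2\nu+\alpha_u^2},$$ $$\mathbb{S}_k=\nu LM^{-1}L^T+M-\frac{1}{\alpha_y^2\nu+\alpha_u^2}\,(\alpha_y\nu LM^{-1}-\alpha_u I)\,\Pi_k M\Pi_k\,(\alpha_y\nu LM^{-1}-\alpha_u I)^T,$$ $$L_1=\sqrt{\nu}\,L\,(I-\gamma_1\Pi_k)^{1/2}+(I-\gamma_2\Pi_k)^{1/2}M,\qquad \widehat{\mathbb{S}}_k=L_1M^{-1}L_1^T .$$ Then $$\widehat{\mathbb{S}}_k=\mathbb{S}_k+\sqrt{\nu}\,\big(L(I-\Pi_k)+(I-\Pi_k)L^T\big).$$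
   Context: Square roots of the diagonal matrices $I-\gamma_i\Pi_k$ (which have nonnegative diagonal entries since $0\le\gamma_i\le 1$) are taken entrywise. In the application, $M$ is a lumped mass matrix, $L$ the discretized convection–diffusion operator, and $\Pi_k$ the diagonal 0/1 indicator matrix of the current active set $\mathcal{A}_k\subseteq\{1,\dots,n\}$ (i.e. $(\Pi_k)_{ii}=1$ iff $i\in\mathcal{A}_k$); $\mathbb{S}_k$ is a block of the active-set Schur complement and $\widehat{\mathbb{S}}_k$ its factorized approximation. *)

(* Defs.v *)
From HB Require Import structures.
From mathcomp Require Import all_boot all_order all_algebra.
From mathcomp Require Import reals.
Set Implicit Arguments. Unset Strict Implicit. Unset Printing Implicit Defensive.
Import Order.TTheory GRing.Theory Num.Theory.
Local Open Scope ring_scope.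

(* Entrywise square root of a matrix (used on the diagonal matrices I - gamma_i Pi_k). *)
Definition mxsqrt_entrywise (R : rcfType) (n : nat) (D : 'M[R]_n) : 'M[R]_n :=
  map_mx (@Num.sqrt R) D.

(* Main.v *)
Require Import Defs.
From HB Require Import structures.
From mathcomp Require Import all_boot all_order all_algebra.
From mathcomp Require Import reals ring lra.
Import Order.TTheory GRing.Theory Num.Theory.
Local Open Scope ring_scope.

Section NFs.
Variable (R : comNzRingType) (n : nat) (L : 'M[R]_n).
Notation dg := diag_mx.
Definition NF (x1 x2 x3 x4 : 'rV[R]_n) :=
  L *m dg x1 *m L^T + L *m dg x2 + dg x3 *m L^T + dg x4.

Lemma NFD x1 x2 x3 x4 y1 y2 y3 y4 :
  NF x1 x2 x3 x4 + NF y1 y2 y3 y4 = NF (x1+y1) (x2+y2) (x3+y3) (x4+y4).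
Proof.
rewrite /NF !linearD /= !mulmxDl.
by rewrite addrACA; congr (_ + _); rewrite addrACA; congr (_ + _); rewrite addrACA.
Qed.

Lemma NFZ k x1 x2 x3 x4 :
  k *: NF x1 x2 x3 x4 = NF (k *: x1) (k *: x2) (k *: x3) (k *: x4).
Proof.
by rewrite /NF !scalerDr !linearZ /= !scalemxAl.
Qed.

Lemma S1 k u : k *: (L *m dg u *m L^T) = L *m dg (k *: u) *m L^T.
Proof. by rewrite linearZ /= -scalemxAr -scalemxAl. Qed.
Lemma S2 k u : k *: (L *m dg u) = L *m dg (k *: u).
Proof. by rewrite linearZ /= -scalemxAr. Qed.
Lemma S3 k u : k *: (dg u *m L^T) = dg (k *: u) *m L^T.
Proof. by rewrite linearZ /= -scalemxAl. Qed.

Lemma NFexp (a b c d e : 'rV[R]_n) (al be : R) :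
  (al *: (L *m dg a) + dg b) *m dg c *m (be *: (dg d *m L^T) + dg e)
  = NF (\row_k (al * be * (a 0 k * c 0 k * d 0 k)))
       (\row_k (al * (a 0 k * c 0 k * e 0 k)))
       (\row_k (be * (b 0 k * c 0 k * d 0 k)))
       (\row_k (b 0 k * c 0 k * e 0 k)).
Proof.
rewrite /NF !mulmxDl !mulmxDr -!scalemxAl -!scalemxAr !scalerA.
have T1 : L *m dg a *m dg c *m dg d = L *m dg (\row_k (a 0 k * c 0 k * d 0 k)).
  by rewrite -!mulmxA !mulmx_diag; congr (_ *m dg _); apply/rowP => k; rewrite !mxE mulrA.
have T2 : L *m dg a *m dg c *m dg e = L *m dg (\row_k (a 0 k * c 0 k * e 0 k)).
  by rewrite -!mulmxA !mulmx_diag; congr (_ *m dg _); apply/rowP => k; rewrite !mxE mulrA.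
have T3 : dg b *m dg c *m dg d = dg (\row_k (b 0 k * c 0 k * d 0 k)).
  by rewrite !mulmx_diag; congr (dg _); apply/rowP => k; rewrite !mxE.
have T4 : dg b *m dg c *m dg e = dg (\row_k (b 0 k * c 0 k * e 0 k)).
  by rewrite !mulmx_diag; congr (dg _); apply/rowP => k; rewrite !mxE.
rewrite !mulmxA T1 T2 T3 T4 S1 S2 S3 -!addrA.

congr (L *m dg _ *m _ + (L *m dg _ + (dg _ *m _ + dg _))); apply/rowP => k; rewrite !mxE; ring.
Qed.
Lemma NFcongr (a b c d a' b' c' d' : 'rV[R]_n) :
  (forall k, a 0 k = a' 0 k) -> (forall k, b 0 k = b' 0 k) ->
  (forall k, c 0 k = c' 0 k) -> (forall k, d 0 k = d' 0 k) ->
  NF a b c d = NF a' b' c' d'.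
Proof.
by move=> ha hb hc hd; congr NF; apply/rowP => k; [apply: ha|apply: hb|apply: hc|apply: hd].
Qed.
End NFs.
Arguments NF {R n} L x1 x2 x3 x4.
Theorem proposition4p1 (R : realType) (n : nat) (hn : (1 <= n)%N)
  (nu au ay : R) (M L P : 'M[R]_n) :
  0 < nu -> 0 <= au -> 0 <= ay -> 0 < Num.max au ay ->
  is_diag_mx M -> (forall i, 0 < M i i) ->
  is_diag_mx P -> (forall i, P i i = 0 \/ P i i = 1) ->
  let c := ay ^+ 2 * nu + au ^+ 2 in
  let g1 := ay ^+ 2 * nu / c in
  let g2 := au ^+ 2 / c in
  let Mi := invmx M in
  let B := ay * nu *: (L *m Mi) - au *: 1%:M in
  let S := nu *: (L *m Mi *m L^T) + M - c^-1 *: (B *m P *m M *m P *m B^T) in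
  let L1 := Num.sqrt nu *: (L *m mxsqrt_entrywise (1%:M - g1 *: P))
            + mxsqrt_entrywise (1%:M - g2 *: P) *m M in
  let Shat := L1 *m Mi *m L1^T in
  Shat = S + Num.sqrt nu *: (L *m (1%:M - P) + (1%:M - P) *m L^T).
Proof.
move=> hnu hau hay hmax hMd hMp hPd hP01 c g1 g2 Mi B S L1 Shat.
have hc : 0 < c.
  rewrite /c !expr2; move: hmax; rewrite lt_max => /orP [h|h].
    have h1 : 0 < au * au by apply: mulr_gt0.
    have h2 : 0 <= ay * ay * nu by apply: mulr_ge0; [apply: mulr_ge0|apply: ltW].
    lra.
  have h1 : 0 < ay * ay * nu by apply: mulr_gt0; [apply: mulr_gt0|].
  have h2 : 0 <= au * au by apply: mulr_ge0.
  lra.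
pose m := \row_i M i i. pose p := \row_i P i i.
have diagE : forall A : 'M[R]_n, is_diag_mx A -> A = diag_mx (\row_i A i i).
  move=> A /is_diag_mxP hA; apply/matrixP => i j; rewrite !mxE.
  case: (altP (i =P j)) => [<-|hij]; first by rewrite mulr1n.
  by rewrite mulr0n hA.
have hM : M = diag_mx m by exact: diagE.
have hPm : P = diag_mx p by exact: diagE.
pose mi := \row_i (M i i)^-1.
have hMi : Mi = diag_mx mi.
  have hu : M \in unitmx.
    rewrite unitmxE hM det_diag unitfE; apply/prodf_neq0 => i _.
    by rewrite mxE; apply/lt0r_neq0.
  have e1 : M *m diag_mx mi = 1%:M.
    rewrite hM mulmx_diag -diag_const_mx; congr diag_mx; apply/rowP => i.
    by rewrite !mxE mulfV // lt0r_neq0.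
  by rewrite /Mi -[invmx M]mulmx1 -e1 mulmxA mulVmx // mul1mx.
have sqD : forall d : 'rV[R]_n, mxsqrt_entrywise (diag_mx d) = diag_mx (map_mx (@Num.sqrt R) d).
  move=> d; apply/matrixP => i j; rewrite !mxE.
  by case: (i == j); rewrite ?mulr1n ?mulr0n ?sqrtr0.
have dgB : forall g : R, 1%:M - g *: P = diag_mx (const_mx 1 - g *: p).
  move=> g; rewrite hPm; apply/matrixP => i j; rewrite !mxE.
  by case: (i == j) => /=; rewrite ?mulr1n ?mulr0n; ring.
have cN : forall a : R, - (a *: 1%:M) = diag_mx (const_mx (- a)) :> 'M[R]_n.
  move=> a; apply/matrixP => i j; rewrite !mxE.
  by case: (i == j) => /=; rewrite ?mulr1n ?mulr0n; ring.
set sn := Num.sqrt nu.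
set d1 := map_mx (@Num.sqrt R) (const_mx 1 - g1 *: p).
set d2 := map_mx (@Num.sqrt R) (const_mx 1 - g2 *: p).
pose b := \row_k (d2 0 k * m 0 k).
have eL1 : L1 = sn *: (L *m diag_mx d1) + diag_mx b.
  by rewrite /L1 !dgB !sqD hM mulmx_diag.
have eL1T : L1^T = sn *: (diag_mx d1 *m L^T) + diag_mx b.
  by rewrite eL1 linearD linearZ /= trmx_mul !tr_diag_mx.
pose q := \row_k (p 0 k * m 0 k * p 0 k).
have eB : B = ay * nu *: (L *m diag_mx mi) + diag_mx (const_mx (- au)).
  by rewrite /B hMi cN.
have eBT : B^T = ay * nu *: (diag_mx mi *m L^T) + diag_mx (const_mx (- au)).
  by rewrite eB linearD linearZ /= trmx_mul !tr_diag_mx.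
have eBP : B *m P *m M *m P = B *m diag_mx q.
  rewrite hPm hM -!mulmxA !mulmx_diag; congr (_ *m diag_mx _); apply/rowP => k.
  by rewrite !mxE mulrA.
have e0 : forall x : 'rV[R]_n, L *m diag_mx x *m L^T = NF L x 0 0 0.
  by move=> x; rewrite /NF linear0 mulmx0 mul0mx !addr0.
have e4 : forall x : 'rV[R]_n, diag_mx x = NF L 0 0 0 x.
  by move=> x; rewrite /NF linear0 mulmx0 !mul0mx !add0r.
have e1P : 1%:M - P = diag_mx (const_mx 1 - p).
  rewrite hPm; apply/matrixP => i j; rewrite !mxE.
  by case: (i == j) => /=; rewrite ?mulr1n ?mulr0n; ring.
have e23 : L *m (1%:M - P) + (1%:M - P) *m L^T = NF L 0 (const_mx 1 - p) (const_mx 1 - p) 0.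
  by rewrite e1P /NF linear0 mulmx0 mul0mx add0r addr0.
have hsc : 0 < Num.sqrt c by rewrite sqrtr_gt0.
have hcsc : c = Num.sqrt c * Num.sqrt c by rewrite -expr2 sqr_sqrtr // ltW.
have hsn : 0 < sn by rewrite sqrtr_gt0.
have hnsn : nu = sn * sn by rewrite -expr2 sqr_sqrtr // ltW.
have h1 : Num.sqrt (1 - g1 * 1) = au / Num.sqrt c.
  have -> : 1 - g1 * 1 = (au / Num.sqrt c) ^+ 2.
    rewrite /g1 mulr1 expr_div_n sqr_sqrtr ?(ltW hc) //.
    rewrite -{1}(divff (lt0r_neq0 hc)) -mulrBl; congr (_ / _); rewrite /c; ring.
  by rewrite sqrtr_sqr ger0_norm // divr_ge0 // ltW.
have h2 : Num.sqrt (1 - g2 * 1) = ay * sn / Num.sqrt c.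
  have -> : 1 - g2 * 1 = (ay * sn / Num.sqrt c) ^+ 2.
    rewrite /g2 mulr1 expr_div_n sqr_sqrtr ?(ltW hc) // exprMn sqr_sqrtr ?ltW //.
    rewrite -{1}(divff (lt0r_neq0 hc)) -mulrBl; congr (_ / _); rewrite /c; ring.
  rewrite sqrtr_sqr ger0_norm // divr_ge0 ?(ltW hsc) //.
  by apply: mulr_ge0 => //; apply: ltW.
rewrite /Shat eL1T eL1 hMi NFexp.
rewrite /S eBP eBT eB NFexp hMi e0 hM (e4 m) e23 -scaleNr !NFZ !NFD.
have hci : c^-1 = (Num.sqrt c * Num.sqrt c)^-1 by rewrite -hcsc.
have sc0 : Num.sqrt c != 0 by apply: lt0r_neq0.
apply: NFcongr => k; rewrite !mxE.
all: have mk0 : M k k != 0 by apply: lt0r_neq0.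
all: case: (hP01 k) => ->; rewrite ?mulr0 ?subr0 ?sqrtr1 ?h1 ?h2 ?hci ?hnsn.
all: try field.
all: try by rewrite mk0 sc0.
- have E : au * au = Num.sqrt c * Num.sqrt c - ay * ay * (sn * sn).
    by rewrite -hcsc -hnsn /c !expr2 addrAC subrr add0r.
  have -> : sn * sn * (au / Num.sqrt c / M k k * (au / Num.sqrt c)) =
            sn * sn * (au * au) / (Num.sqrt c * Num.sqrt c) / M k k.
    by field; rewrite mk0 sc0.
  rewrite E; field; by rewrite mk0 sc0.
- have E : au * au = Num.sqrt c * Num.sqrt c - ay * ay * (sn * sn).
    by rewrite -hcsc -hnsn /c !expr2 addrAC subrr add0r.
  have -> : - au * (1 * M k k * 1) * - au = (au * au) * M k k by ring.
  rewrite E; field; by rewrite mk0 sc0.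
Qed.
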